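(* Under the setting in the context (in particular $\hat\tau$ permutation-invariant), for every $j\in\mathcal U$ and $k\in\mathcal C$, $$\mathbb E\Big[\frac{\mathbf 1\{R_j>\mathcal Q_j,\ T_k\le\hat\tau,\ T_j\le\hat\tau\}}{\sum_{i\in\mathcal C\cup\{j\}}\mathbf 1\{T_i\le\hat\tau\}}\Big]=\mathbb E\Big[\frac{\mathbf 1\{R_k>\mathcal Q_j,\ T_k\le\hat\tau,\ T_j\le\hat\tau\}}{\sum_{i\in\mathcal C\cup\{j\}}\mathbf 1\{T_i\le\hat\tau\}}\Big],$$ where $\mathcal Q_j$ is the $\lceil(1-\alpha)(|\hat{\mathcal S}_c|+1)\rceil$-th smallest value of $\{R_i: i\in\hat{\mathcal S}_c\cup\{j\}\}$.
   Context: Setting: $\hat\mu,g:\mathbb R^d\to\mathbb R$ fixed deterministic measurable functions; calibration indices $\mathcal C$ ($|\mathcal C|=n$) and disjoint test indices $\mathcal U$ ($|\mathcal U|=m$); $(X_i,Y_i)$, $i\in\mathcal C\cup\mathcal U$, i.i.d.; $T_i=g(X_i)$, $R_i=|Y_i-\hat\mu(X_i)|$; $\alpha\in(0,1)$. The threshold is $\hat\tau=\tau(T_i:i\in\mathcal C\cup\mathcal U)$ for a deterministic measurable $\tau:\mathbb R^{n+m}\to\mathbb R$ invariant under permutations of its arguments, and $\hat{\mathcal S}_c=\{i\in\mathcal C:T_i\le\hat\tau\}$. The ratio inside the expectations is interpreted as $0$ when the indicator in the numerator is $0$. *)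

(* Defs.v *)
From HB Require Import structures.
From mathcomp Require Import all_boot all_order all_algebra all_fingroup.
From mathcomp Require Import all_classical all_reals all_analysis.
Set Implicit Arguments. Unset Strict Implicit. Unset Printing Implicit Defensive.
Import Order.TTheory GRing.Theory Num.Theory.
Local Open Scope classical_set_scope.
Local Open Scope ring_scope.

(* Data Z_i = (X_i, Y_i) in R^d x R, indexed by 'I_N (N = n + m). *)

Definition iid_family {dO : measure_display} {Omega : measurableType dO}
  {R : realType} {dT : measure_display} {T : measurableType dT} (N : nat)
  (P : probability Omega R) (Z : 'I_N -> Omega -> T) : Prop :=
  (forall i, measurable_fun [set: Omega] (Z i)) /\
  (forall i j (A : set T), measurable A ->
      P (Z i @^-1` A) = P (Z j @^-1` A)) /\
  (forall B : 'I_N -> set T, (forall i, measurable (B i)) ->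
      P (\bigcap_i (Z i @^-1` B i)) = (\prod_(i < N) P (Z i @^-1` B i))%E).

Definition perm_invariant {R : realType} (N : nat) (tau : N.-tuple R -> R) :=
  forall (s : 'S_N) (t : N.-tuple R), tau [tuple tnth t (s i) | i < N] = tau t.

(* k-th smallest (1-based) element of a finite list of reals *)
Definition kth_smallest {R : realType} (k : nat) (s : seq R) : R :=
  nth 0 (sort <=%R s) k.-1.

(* Main.v *)
Require Import Defs.
From HB Require Import structures.
From mathcomp Require Import all_boot all_order all_algebra all_fingroup.
From mathcomp Require Import all_classical all_reals all_analysis.
From mathcomp Require Import measurable_realfun.
Import Order.TTheory GRing.Theory Num.Theory.
Local Open Scope ring_scope.
Set Implicit Arguments. Unset Strict Implicit. Unset Printing Implicit Defensive.
Section cyl.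
Local Open Scope classical_set_scope.
Context {dT : measure_display} {T : measurableType dT} (N : nat).

Definition cyl : set (set (N.-tuple T)) :=
  [set C | exists B : 'I_N -> set T, (forall i, measurable (B i)) /\
     C = [set t | forall i, B i (tnth t i)]].

Lemma cyl_gen : @measurable _ (N.-tuple T) = <<s cyl >>.
Proof.
apply/seteqP; split.
- apply: smallest_sub; first exact: smallest_sigma_algebra.
  move=> A; rewrite -bigcup_seq => -[i _ [B mB <-]].
  apply: sub_sigma_algebra; exists (fun i' => if i' == i then B else setT); split.
    by move=> i'; case: eqP.
  apply/seteqP; split => t /=.
    by move=> [_ Bt] i'; case: eqP => // ->.
  by move=> /(_ i); rewrite eqxx.
- apply: smallest_sub; first exact: sigma_algebra_measurable.
  move=> _ [B [mB ->]].
  rewrite (_ : [set t | _] = bigcap [set: 'I_N] (fun i => (fun t : N.-tuple T => tnth t i) @^-1` B i)); last first.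
    by apply/seteqP; split => t /= H i; [move=> _|]; apply: H.
  apply: fin_bigcap_measurable; first exact: finite_finset.
  move=> i _; rewrite -[X in measurable X]setTI.
  exact: (measurable_tnth i).
Qed.
End cyl.



Section swap.
Local Open Scope classical_set_scope.
Context {dO : measure_display} {Omega : measurableType dO} {R : realType}
  {dT : measure_display} {T : measurableType dT} (N : nat)
  (P : probability Omega R) (Z : 'I_N -> Omega -> T).
Hypothesis iidZ : iid_family P Z.

Definition Zv (s : 'S_N) (w : Omega) : N.-tuple T := [tuple Z (s i) w | i < N].

Lemma mZv s : measurable_fun setT (Zv s).
Proof.
apply/measurable_fun_tnthP => i.
rewrite (_ : _ \o _ = Z (s i)); first by case: iidZ.
by apply/funext => w /=; rewrite tnth_mktuple.
Qed.

Lemma Zv_cyl s (B : 'I_N -> set T) : (forall i, measurable (B i)) ->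
  P (Zv s @^-1` [set t | forall i, B i (tnth t i)]) =
  (\prod_(i < N) P (Z i @^-1` B i))%E.
Proof.
move=> mB; case: iidZ => mZ [idZ indZ].
have -> : Zv s @^-1` [set t | forall i, B i (tnth t i)] =
    \bigcap_i (Z i @^-1` B (s^-1 i)%g).
  apply/seteqP; split => w /=.
    by move=> H i _; have := H (s^-1 i)%g; rewrite tnth_mktuple permKV.
  by move=> H i; rewrite tnth_mktuple; have := H (s i) I; rewrite permK.
rewrite indZ; last by move=> i; apply: mB.
rewrite (reindex_inj (@perm_inj _ s)) /=.
by apply: eq_bigr => i _; rewrite permK (idZ _ i) //; apply: mB.
Qed.

Lemma law_perm (s : 'S_N) A : measurable A ->
  P (Zv 1%g @^-1` A) = P (Zv s @^-1` A).
Proof.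
move=> mA.
pose m1 := measure_function_pushforward__canonical__measure_function_Measure P (mZv 1%g).
pose m2 := measure_function_pushforward__canonical__measure_function_Measure P (mZv s).
have := (@measure_unique _ R (N.-tuple T) (@cyl _ T N) (fun _ => setT) (@cyl_gen _ T N) _ _ _ m1 m2 _ _ A mA).
apply.
- move=> _ _ [B [mB ->]] [B' [mB' ->]]; exists (fun i => B i `&` B' i); split.
    by move=> i; apply: measurableI.
  by apply/seteqP; split => t /=; [move=> [H1 H2] i; split|move=> H; split => i; case: (H i)].
- move=> _; exists (fun _ => setT); split => //.
  by apply/seteqP; split.
- by rewrite bigcup_const.
- by move=> _ [B [mB ->]]; rewrite /m1 /m2 /= /pushforward !Zv_cyl.
- move=> _; rewrite /m1 /= /pushforward.
  apply: (le_lt_trans (probability_le1 _ _)) => //; last by rewrite ltry.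
  by rewrite -[X in measurable X]setTI; apply: (mZv 1%g).
Qed.

Lemma int_perm (s : 'S_N) (F : N.-tuple T -> R) : measurable_fun setT F ->
  (forall t, 0 <= F t) ->
  (\int[P]_w (F (Zv 1%g w))%:E = \int[P]_w (F (Zv s w))%:E)%E.
Proof.
move=> mF F0.
have mFE : measurable_fun setT (EFin \o F) by apply/measurable_EFinP.
have H s' : (\int[P]_w (F (Zv s' w))%:E =
    \int[pushforward P (Zv s')]_y (F y)%:E)%E.
  rewrite (@ge0_integral_pushforward _ _ _ _ _ _ (mZv s') P setT (EFin \o F)) //.
  by move=> y _ /=; rewrite lee_fin.
rewrite (H 1%g) (H s).
apply: (@eq_measure_integral _ _ _ setT
  (measure_function_pushforward__canonical__measure_function_Measure P (mZv s))
  (measure_function_pushforward__canonical__measure_function_Measure P (mZv 1%g))).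
by move=> B mB _ /=; rewrite /pushforward (law_perm s).
Qed.
End swap.

Lemma sorted_nth_lt (R : realType) (ss : seq R) (x : R) i :
  sorted <=%R ss -> (i < size ss)%N ->
  (nth 0 ss i < x) = (i < count (fun y => (y < x)%R) ss)%N.
Proof.
elim: ss i => [|y ss IH] i //= Hs Hi.
have Hs' : sorted <=%R ss := path_sorted Hs.
have Hall : all (fun z => y <= z) ss.
  by apply: (order_path_min (@le_trans _ R)).
have cnt0 : ~~ (y < x) -> count (fun y => (y < x)%R) ss = 0%N.
  move=> Hyx; apply/eqP; rewrite -leqn0 leqNgt -has_count; apply/hasPn => z zs.
  move/allP: Hall => /(_ z zs) yz; rewrite -leNgt.
  by rewrite -leNgt in Hyx; apply: le_trans Hyx yz.
case: i Hi => [|i] Hi /=.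
  by case: (boolP (y < x)) => H //=; rewrite cnt0.
rewrite IH //; case: (boolP (y < x)) => H /=; first by rewrite add1n ltnS.
rewrite cnt0 // add0n ltn0; apply/negbTE; rewrite -leNgt.
Qed.

Lemma kth_lt (R : realType) k (s : seq R) x :
  (kth_smallest k s < x) =
  if (k.-1 < size s)%N then (k.-1 < count (fun y => (y < x)%R) s)%N else 0 < x.
Proof.
rewrite /kth_smallest.
case: ifP => H.
  rewrite sorted_nth_lt ?size_sort ?sort_sorted //; last by move=> a b; apply: le_total.
  have /seq.permP -> // : perm_eq (sort <=%R s) s by rewrite perm_sort.
by rewrite nth_default // size_sort leqNgt H.
Qed.

Section meas.
Context {dW : measure_display} (W : measurableType dW) (R : realType).

Lemma mor (f h : W -> bool) : measurable_fun setT f -> measurable_fun setT h ->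
  measurable_fun setT (fun t => f t || h t).
Proof.
move=> mf mh.
have -> : (fun t => f t || h t) = (fun t => ~~ (~~ f t && ~~ h t)).
  by apply/funext => t; rewrite negb_and !negbK.
by apply: measurable_neg; apply: measurable_and; apply: measurable_neg.
Qed.

Lemma mnat_fun (h : W -> nat) K (phi : nat -> R) :
  measurable_fun setT (fun t => (h t)%:R : R) -> (forall t, (h t <= K)%N) ->
  measurable_fun setT (fun t => phi (h t)).
Proof.
move=> mh hK.
have -> : (fun t => phi (h t)) = (fun t => \sum_(c <- iota 0 K.+1)
     (if (h t)%:R == c%:R :> R then phi c else 0)).
  apply/funext => t.
  rewrite (bigD1_seq (h t)) ?iota_uniq ?mem_iota ?add0n ?ltnS ?hK //.
  rewrite eqxx big1 => [|c Hc]; first by rewrite [RHS]addr0.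
  rewrite eqr_nat.
  by rewrite eq_sym (negbTE Hc).
apply: measurable_sum => c; apply: measurable_fun_ifT => //.
exact: measurable_fun_eqr mh (measurable_cst _).
Qed.

Lemma mnat_funb (h : W -> nat) K (psi : nat -> bool) :
  measurable_fun setT (fun t => (h t)%:R : R) -> (forall t, (h t <= K)%N) ->
  measurable_fun setT (fun t => psi (h t)).
Proof.
move=> mh hK.
have -> : (fun t => psi (h t)) =
   (fun t => (0 : R) < (fun c => if psi c then 1 else 0 : R) (h t)).
  by apply/funext => t /=; case: (psi (h t)); rewrite ?ltr01 ?ltxx.
exact: (measurable_fun_ltr (measurable_cst (0:R)) (@mnat_fun h K (fun c => if psi c then 1 else 0) mh hK)).
Qed.

Lemma mnat_fun2 (h1 h2 : W -> nat) K (psi : nat -> nat -> bool) :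
  measurable_fun setT (fun t => (h1 t)%:R : R) -> (forall t, (h1 t <= K)%N) ->
  measurable_fun setT (fun t => (h2 t)%:R : R) -> (forall t, (h2 t <= K)%N) ->
  measurable_fun setT (fun t => psi (h1 t) (h2 t)).
Proof.
move=> m1 b1 m2 b2.
pose h t := (h1 t * K.+1 + h2 t)%N.
have -> : (fun t => psi (h1 t) (h2 t)) =
    (fun t => (fun c => psi (c %/ K.+1)%N (c %% K.+1)%N) (h t)).
  apply/funext => t /=; rewrite /h divnMDl // modnMDl divn_small ?modn_small ?addn0 //.
  by rewrite ltnS.
  by rewrite ltnS.
apply: (@mnat_funb h (K * K.+1 + K) (fun c => psi (c %/ K.+1)%N (c %% K.+1)%N)).
  rewrite /h; under eq_fun do rewrite natrD natrM.
  apply: measurable_funD => //; apply: measurable_funM => //; exact: measurable_cst.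
move=> t; rewrite /h leq_add // leq_mul //.
Qed.

Lemma mnat_sum (I : finType) (b : I -> W -> bool) (P : pred I) :
  (forall i, measurable_fun setT (b i)) ->
  measurable_fun setT (fun t => (\sum_(i | P i) (b i t : nat))%:R : R).
Proof.
move=> mb.
have -> : (fun t => (\sum_(i | P i) (b i t : nat))%:R : R) =
   (fun t => \sum_(i <- index_enum I) (if P i && b i t then 1 else 0 : R)).
  apply/funext => t; rewrite natr_sum big_mkcond /=; apply: eq_bigr => i _.
  by case: (P i); case: (b i t).
apply: measurable_sum => i; apply: measurable_fun_ifT => //.
  by apply: measurable_and => //; exact: measurable_cst.
Qed.
End meas.

Section core.
Context (R : realType) (d n m : nat) (alpha : R) (muhat g : d.-tuple R -> R)
  (tau : (n + m).-tuple R -> R).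

Definition Phi (z : 'I_(n + m) -> d.-tuple R * R) (j r k : 'I_(n + m)) : R :=
  let T := fun i => g (z i).1 in
  let Res := fun i => `|(z i).2 - muhat (z i).1| in
  let tauhat := tau [tuple T i | i < n + m] in
  let Shat := [set i : 'I_(n + m) | (i < n)%N && (T i <= tauhat)] in
  let Q := kth_smallest `|Num.ceil ((1 - alpha) * (#|Shat|.+1)%:R)|%N
      [seq Res i | i <- enum (Shat :|: [set j])] in
  let den := \sum_(i < n + m | (i < n)%N || (i == j)) (if T i <= tauhat then 1 else 0 : R) in
  if [&& Q < Res r, T k <= tauhat & T j <= tauhat] then den^-1 else 0.

Lemma Phi_swap z (j k : 'I_(n + m)) : (n <= j)%N -> (k < n)%N -> perm_invariant tau ->
  Phi (fun i => z (tperm j k i)) j j k = Phi z j k k.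
Proof.
move=> hj hk htau.
set s := tperm j k.
have jk : j != k by apply/eqP => E; move: hk; rewrite -E ltnNge hj.
rewrite /Phi /=.
set T := fun i => g (z i).1.
set Res := fun i => `|(z i).2 - muhat (z i).1|.
have -> : tau [tuple g (z (s i)).1 | i < n + m] = tau [tuple T i | i < n + m].
  rewrite -[RHS](htau s); congr tau; apply: eq_mktuple => i.
  by rewrite tnth_mktuple.
set tauhat := tau [tuple T i | i < n + m].
rewrite /s tpermL tpermR -/s.
change (g (z j).1) with (T j); change (g (z k).1) with (T k).
change (`|(z k).2 - muhat (z k).1|) with (Res k).
case: (boolP (T k <= tauhat)) => Hk; last by rewrite !andbF.
case: (boolP (T j <= tauhat)) => Hj; last by rewrite !andbF.
rewrite !andbT.
have sT i : (T (s i) <= tauhat) = (T i <= tauhat).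
  rewrite /s; case: (tpermP j k i) => [->|->|//]; by rewrite Hj Hk.
set Shat := [set i : 'I_(n + m) | (i < n)%N && (T i <= tauhat)].
have -> : [set i : 'I_(n + m) | (i < n)%N && (g (z (s i)).1 <= tauhat)] = Shat.
  by apply/setP => i; rewrite !inE -[g _ <= _]/(T (s i) <= tauhat) sT.
have -> : \sum_(i < n + m | (i < n)%N || (i == j))
     (if g (z (s i)).1 <= tauhat then 1 else 0 : R) =
   \sum_(i < n + m | (i < n)%N || (i == j)) (if T i <= tauhat then 1 else 0 : R).
  by apply: eq_bigr => i _; rewrite -[g _ <= _]/(T (s i) <= tauhat) sT.
set A := Shat :|: [set j].
have -> : [seq `|(z (s i)).2 - muhat (z (s i)).1| | i <- enum A] =
          [seq Res (s i) | i <- enum A] by [].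
rewrite /kth_smallest.
suff -> : sort <=%R [seq Res (s i) | i <- enum A] = sort <=%R [seq Res i | i <- enum A] by [].
apply/perm_sortP; [by move=> a b; apply: le_total|exact: le_trans|exact: le_anti|].
rewrite (map_comp Res s); apply: perm_map.
have Ast i : i \in A -> s i \in A.
  rewrite /A !inE /s; case: (tpermP j k i) => [->|->|//].
    by rewrite hk Hk eqxx orbT.
  by rewrite eqxx orbT.
apply: uniq_perm; first by rewrite map_inj_uniq ?enum_uniq //; apply: perm_inj.
  exact: enum_uniq.
move=> i; apply/mapP/idP.
  by move=> [i' Hi' ->]; rewrite mem_enum; apply: Ast; rewrite mem_enum in Hi'.
rewrite mem_enum => Hi; exists (s i); first by rewrite mem_enum; apply: Ast.
by rewrite /s tpermK.
Qed.

Lemma sum1_nat (I : finType) (P : pred I) : (\sum_(i | P i) 1 = \sum_i (P i : nat))%N.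
Proof. by rewrite big_mkcond /=; apply: eq_bigr => i _; case: (P i). Qed.

Lemma sum_ind (I : finType) (P : pred I) (b : I -> bool) :
  \sum_(i | P i) (if b i then 1 else 0 : R) = (\sum_(i | P i) (b i : nat))%:R.
Proof. by rewrite natr_sum; apply: eq_bigr => i _; case: (b i). Qed.

Lemma sum_le (I : finType) (b : I -> bool) (P : pred I) : (\sum_(i | P i) (b i : nat) <= #|I|)%N.
Proof.
rewrite -sum1_card; apply: (@leq_trans (\sum_(i | P i) 1)%N).
  by apply: leq_sum => i _; case: (b i).
by rewrite big_mkcond /=; apply: leq_sum => i _; case: (P i).
Qed.

Lemma mPhi (j r k : 'I_(n + m)) : (n <= j)%N ->
  measurable_fun setT muhat -> measurable_fun setT g -> measurable_fun setT tau ->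
  measurable_fun [set: (n + m).-tuple (d.-tuple R * R)]
    (fun t => Phi (fun i => tnth t i) j r k).
Proof.
move=> hj mmu mg mtau.
pose W := (n + m).-tuple (d.-tuple R * R).
pose Tf i (t : W) := g (tnth t i).1.
pose Rf i (t : W) := `|(tnth t i).2 - muhat (tnth t i).1|.
pose tauf (t : W) := tau [tuple Tf i t | i < n + m].
pose bT i t := Tf i t <= tauf t.
pose cS (t : W) := (\sum_(i < n + m) (((i < n)%N && bT i t) : nat))%N.
pose cnt (t : W) := (\sum_(i < n + m) ((((i < n)%N && bT i t) || (i == j)) && (Rf i t < Rf r t)%R : nat))%N.
pose dn (t : W) := (\sum_(i < n + m | (i < n)%N || (i == j)) (bT i t : nat))%N.
pose kk c := `|Num.ceil ((1 - alpha) * (c.+1)%:R)|%N.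
pose psi2 a b := (((kk a).-1 < a.+1) && ((kk a).-1 < b))%N.
have -> : (fun t => Phi (fun i => tnth t i) j r k) =
  (fun t => if [&& psi2 (cS t) (cnt t) || (~~ ((kk (cS t)).-1 < (cS t).+1)%N && (0 < Rf r t)),
       bT k t & bT j t] then (fun c : nat => (c%:R)^-1 : R) (dn t) else 0).
  apply/funext => t; rewrite /Phi /=.
  set Shat := [set i | _].
  have eS : #|Shat| = cS t by rewrite /Shat -sum1dep_card sum1_nat.
  have jS : j \notin Shat by rewrite inE negb_and -leqNgt hj.
  have eA : #|Shat :|: [set j]| = (cS t).+1 by rewrite finset.setUC cardsU1 jS eS.
  rewrite kth_lt size_map -cardE eA eS count_map.
  rewrite -sum1_count big_enum_cond /= sum1_nat.
  have -> : (\sum_i ((i \in Shat :|: [set j]) && (Rf i t < Rf r t)%R : nat))%N = cnt t.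
    by apply: eq_bigr => i _; rewrite !inE.
  rewrite sum_ind.
  have E (c a b : bool) : (if c then a else b) = (c && a || ~~ c && b) by case: c => /=; rewrite ?orbF.
  by rewrite E.
have mTf i : measurable_fun setT (Tf i).
  apply: (measurableT_comp mg); apply: (measurableT_comp measurable_fst).
  exact: measurable_tnth.
have mRf i : measurable_fun setT (Rf i).
  apply: measurableT_comp; first exact: normr_measurable.
  apply: measurable_funB.
    apply: (measurableT_comp measurable_snd); exact: measurable_tnth.
  apply: (measurableT_comp mmu); apply: (measurableT_comp measurable_fst).
  exact: measurable_tnth.
have mtauf : measurable_fun setT tauf.
  apply: (measurableT_comp mtau); apply/measurable_fun_tnthP => i.
  rewrite (_ : _ \o _ = Tf i) //.
  by apply/funext => t /=; rewrite tnth_mktuple.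
have mbT i : measurable_fun setT (bT i) := measurable_fun_ler (mTf i) mtauf.
have bnd (b : 'I_(n + m) -> W -> bool) (P : pred 'I_(n + m)) t :
    (\sum_(i | P i) (b i t : nat) <= n + m)%N.
  by rewrite -[X in (_ <= X)%N]card_ord sum_le.
have mcS : measurable_fun setT (fun t => (cS t)%:R : R).
  rewrite /cS; apply: mnat_sum => i; apply: measurable_and; [exact: measurable_cst|exact: mbT].
have mcnt : measurable_fun setT (fun t => (cnt t)%:R : R).
  rewrite /cnt; apply: mnat_sum => i; apply: measurable_and.
    apply: mor; [apply: measurable_and; [exact: measurable_cst|exact: mbT]|exact: measurable_cst].
  exact: measurable_fun_ltr (mRf i) (mRf r).
have mdn : measurable_fun setT (fun t => (dn t)%:R : R).
  by rewrite /dn; apply: mnat_sum => i; exact: mbT.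
apply: measurable_fun_ifT; last exact: measurable_cst.
  apply: measurable_and; last by apply: measurable_and; exact: mbT.
  apply: mor.
    exact: (@mnat_fun2 _ W R cS cnt (n + m) psi2 mcS (bnd _ _) mcnt (bnd _ _)).
  apply: measurable_and.
    apply: measurable_neg.
    exact: (@mnat_funb _ W R cS (n + m) (fun c => (kk c).-1 < c.+1)%N mcS (bnd _ _)).
  exact: (measurable_fun_ltr (measurable_cst (0:R)) (mRf r)).
exact: (@mnat_fun _ W R dn (n + m) (fun c => (c%:R)^-1) mdn (bnd _ _)).
Qed.
End core.

Lemma Phi_ge0 (R : realType) (d n m : nat) (alpha : R) (muhat g : d.-tuple R -> R)
  (tau : (n + m).-tuple R -> R) z j r k : 0 <= @Phi R d n m alpha muhat g tau z j r k.
Proof.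
rewrite /Phi /=; case: ifP => // _; rewrite invr_ge0; apply: sumr_ge0 => i _.
by case: ifP.
Qed.

Unset Implicit Arguments.
Theorem lemma8 (R : realType) (d n m : nat) (alpha : R)
  (dO : measure_display) (Omega : measurableType dO) (P : probability Omega R)
  (X : 'I_(n + m) -> Omega -> d.-tuple R) (Y : 'I_(n + m) -> Omega -> R)
  (muhat g : d.-tuple R -> R) (tau : (n + m).-tuple R -> R) :
  measurable_fun [set: d.-tuple R] muhat ->
  measurable_fun [set: d.-tuple R] g ->
  measurable_fun [set: (n + m).-tuple R] tau ->
  perm_invariant tau ->
  0 < alpha < 1 ->
  iid_family P (fun i w => (X i w, Y i w)) ->
  let T := fun i w => g (X i w) in
  let Res := fun i w => (`|Y i w - muhat (X i w)| : R) in
  let tauhat := fun w => tau [tuple T i w | i < n + m] in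
  let Shat := fun w => [set i : 'I_(n + m) | (i < n)%N && (T i w <= tauhat w)] in
  forall j k : 'I_(n + m), (n <= j)%N -> (k < n)%N ->
  let Q := fun w => kth_smallest
      `|Num.ceil ((1 - alpha) * (#|Shat w|.+1)%:R)|%N
      [seq Res i w | i <- enum (Shat w :|: [set j])] in
  let den := fun w => \sum_(i < n + m | (i < n)%N || (i == j)) (if T i w <= tauhat w then 1 else 0 : R) in
  (\int[P]_w (if [&& Q w < Res j w, T k w <= tauhat w & T j w <= tauhat w]
              then (den w)^-1 else 0)%:E =
   \int[P]_w (if [&& Q w < Res k w, T k w <= tauhat w & T j w <= tauhat w]
              then (den w)^-1 else 0)%:E)%E.
Proof.
move=> mmu mg mtau htau halpha iid T Res tauhat Shat j k hj hk Q den.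
change ((\int[P]_w (@Phi R d n m alpha muhat g tau (fun i => (X i w, Y i w)) j j k)%:E =
  \int[P]_w (@Phi R d n m alpha muhat g tau (fun i => (X i w, Y i w)) j k k)%:E)%E).
pose Z i w := (X i w, Y i w).
pose F (t : (n + m).-tuple (d.-tuple R * R)) := @Phi R d n m alpha muhat g tau (fun i => tnth t i) j j k.
have mF : measurable_fun setT F by apply: mPhi.
have F0 t : 0 <= F t by apply: Phi_ge0.
transitivity (\int[P]_w (F (Zv Z 1%g w))%:E)%E.
  apply: eq_integral => w _; congr EFin; rewrite /F; congr Phi.
  by apply/funext => i; rewrite tnth_mktuple perm1.
rewrite (int_perm iid (tperm j k) mF F0).
apply: eq_integral => w _; congr EFin; rewrite /F.
rewrite -(@Phi_swap R d n m alpha muhat g tau _ j k hj hk htau); congr Phi.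
by apply/funext => i; rewrite tnth_mktuple.
Qed.
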